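(* Let $n\ge3$. Then the map $\gamma\colon\mathbb{R}\to\mathcal{C}^1$ is injective (i.e. $\gamma$ is an embedded bi-infinite path).
   Context: Let $\mathbf{k}$ be a field of characteristic zero; $\mathrm{Tame}(\mathbf{k}^3)=\langle \mathrm{GL}_3(\mathbf{k})\ltimes\mathbf{k}^3,\ \{(x_1+P(x_2,x_3),x_2,x_3)\}\rangle$. For $r\in\{1,2,3\}$ a vertex of type $r$ is an orbit $[f_1,\dots,f_r]$, under post-composition by $\mathrm{GL}_r(\mathbf{k})\ltimes\mathbf{k}^r$, of the first $r$ components of an element $(f_1,f_2,f_3)\in\mathrm{Tame}(\mathbf{k}^3)$. $\mathcal{C}$ is the 2-dimensional simplicial complex on these vertices with triangles $[f_1],[f_1,f_2],[f_1,f_2,f_3]$ for $(f_1,f_2,f_3)\in\mathrm{Tame}(\mathbf{k}^3)$, with 1-skeleton $\mathcal{C}^1$; $\mathrm{Tame}(\mathbf{k}^3)$ acts by $g\cdot[f_1,\dots,f_r]=[f_1\circ g^{-1},\dots,f_r\circ g^{-1}]$. Let $g^{-1}=(x_2,x_1+x_2x_3,x_3)$, $h^{-1}=(x_3,x_1,x_2)$, $f=g^n\circ h$. Define $\gamma\colon\mathbb{R}\to\mathcal{C}^1$ by $\gamma(0)=[x_1]$, $\gamma(1)=[x_1,x_3]$, $\gamma(2)=[x_3]$, $\gamma[0,2]$ the length 2 path through them (parametrised by arc length), and $\gamma[2k,2k+2]=f^k\cdot\gamma[0,2]$ for $k\in\mathbb{Z}$. *)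

(* Defs.v *)
From Stdlib Require Import Reals ZArith.
From HB Require Import structures.
From mathcomp Require Import all_boot all_order all_algebra.
Set Implicit Arguments. Unset Strict Implicit. Unset Printing Implicit Defensive.
Import GRing.Theory.
Local Open Scope ring_scope.

Section Defs.
Variable k : fieldType.

(* k[x1,x2,x3] represented as k[x3][x2][x1]: outermost variable x1, innermost x3 *)
Definition P3 := {poly {poly {poly k}}}.
Definition x1 : P3 := 'X.
Definition x2 : P3 := ('X)%:P.
Definition x3 : P3 := ('X)%:P%:P.
Definition cst (c : k) : P3 := c%:P%:P%:P.

(* polynomial maps k^3 -> k^3, as triples of components (F1, F2, F3) *)
Definition map3 := (P3 * P3 * P3)%type.
Definition c1 (F : map3) : P3 := F.1.1.
Definition c2 (F : map3) : P3 := F.1.2.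
Definition c3 (F : map3) : P3 := F.2.
Definition mk3 (a b c : P3) : map3 := (a, b, c).

Definition sub3 (p : P3) (F : map3) : P3 :=
  \sum_(i < size p) (\sum_(j < size p`_i)
     (\sum_(l < size p`_i`_j) cst p`_i`_j`_l * (c3 F) ^+ l) * (c2 F) ^+ j)
     * (c1 F) ^+ i.

Definition comp3 (F G : map3) : map3 :=
  mk3 (sub3 (c1 F) G) (sub3 (c2 F) G) (sub3 (c3 F) G).
Definition id3 : map3 := mk3 x1 x2 x3.

Definition ginv : map3 := mk3 x2 (x1 + x2 * x3) x3.
Definition hinv : map3 := mk3 x3 x1 x2.

(* vertices: tuples (f1,...,fr) up to post-composition by GL_r(k) \ltimes k^r *)
Definition vert_eq (u v : seq P3) : Prop :=
  size u = size v /\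
  exists (A : 'M[k]_(size u)) (b : 'I_(size u) -> k),
    A \in unitmx /\
    forall i : 'I_(size u),
      nth 0 v i = \sum_(j < size u) cst (A i j) * nth 0 u j + cst (b i).

(* action of an automorphism F (given together with its inverse Finv) on vertices:
   F . [f1,..,fr] = [f1 \o F^{-1}, .., fr \o F^{-1}] *)
Definition act (Finv : map3) (v : seq P3) : seq P3 := [seq sub3 p Finv | p <- v].

Definition fmap (n : nat) (g h : map3) : map3 := comp3 (iter n (comp3 g) id3) h.
Definition finv (n : nat) : map3 := comp3 hinv (iter n (comp3 ginv) id3).

Definition fpowZ (n : nat) (g h : map3) (z : Z) : map3 :=
  if Z.leb Z0 z then iter (Z.to_nat z) (comp3 (fmap n g h)) id3
  else iter (Z.to_nat (Z.opp z)) (comp3 (finv n)) id3.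

(* the vertex gamma(m), m integer:
   gamma(2k) = f^k . [x1],  gamma(2k+1) = f^k . [x1, x3] *)
Definition gvert (n : nat) (g h : map3) (m : Z) : seq P3 :=
  let q := Z.div m (Zpos 2%positive) in
  act (fpowZ n g h (Z.opp q)) (if Z.even m then [:: x1] else [:: x1; x3]).

(* points of the geometric realisation of the graph C^1 (edges of length 1):
   a vertex, or the point (1-t) v + t w of the edge {v,w}, 0 < t < 1 *)
Inductive point :=
| PVert : seq P3 -> point
| PEdge : seq P3 -> seq P3 -> R -> point.

Definition point_eq (p q : point) : Prop :=
  match p, q with
  | PVert v, PVert w => vert_eq v w
  | PEdge v w t, PEdge v' w' t' =>
      (vert_eq v v' /\ vert_eq w w' /\ t = t') \/
      (vert_eq v w' /\ vert_eq w v' /\ t = Rminus R1 t')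
  | _, _ => False
  end.

Definition gamma (n : nat) (g h : map3) (s : R) : point :=
  let m := Int_part s in
  let t := Rminus s (IZR m) in
  if Req_EM_T t R0 then PVert (gvert n g h m)
  else PEdge (gvert n g h m) (gvert n g h (Z.succ m)) t.

End Defs.

(* Main.v *)
Require Import Defs.
From Stdlib Require Import Reals ZArith.
From HB Require Import structures.
From mathcomp Require Import all_boot all_order all_algebra.
From Stdlib Require Import Lia Lra.
From mathcomp Require Import zify.
Require Import Defs.
Import GRing.Theory.
Local Open Scope ring_scope.

Module M1.
Set Implicit Arguments. Unset Strict Implicit. Unset Printing Implicit Defensive.
Local Open Scope ring_scope.

Section Ev.
Variable k : fieldType.
Variable S : comNzRingType.
Variable iota : {rmorphism k -> S}.

Lemma cfS (f : {rmorphism k -> S}) (c : S) : commr_rmorph f c.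
Proof. by move=> x; rewrite /GRing.comm mulrC. Qed.
Lemma cfS' (T : nzRingType) (f : {rmorphism T -> S}) (c : S) : commr_rmorph f c.
Proof. by move=> x; rewrite /GRing.comm mulrC. Qed.

Definition e3 (c : S) := horner_morph (cfS iota c).
Definition e2 (b c : S) := horner_morph (cfS' (e3 c) b).
Definition e1 (a b c : S) := horner_morph (cfS' (e2 b c) a).



Lemma e1E a b c p : e1 a b c p = (map_poly (e2 b c) p).[a]. Proof. by []. Qed.
Lemma e2E b c p : e2 b c p = (map_poly (e3 c) p).[b]. Proof. by []. Qed.
Lemma e3E c p : e3 c p = (map_poly iota p).[c]. Proof. by []. Qed.

Lemma e1C a b c q : e1 a b c q%:P = e2 b c q. Proof. exact: horner_morphC. Qed.
Lemma e1X a b c : e1 a b c 'X = a. Proof. exact: horner_morphX. Qed.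
Lemma e2C b c q : e2 b c q%:P = e3 c q. Proof. exact: horner_morphC. Qed.
Lemma e2X b c : e2 b c 'X = b. Proof. exact: horner_morphX. Qed.
Lemma e3C c q : e3 c q%:P = iota q. Proof. exact: horner_morphC. Qed.
Lemma e3X c : e3 c 'X = c. Proof. exact: horner_morphX. Qed.

Lemma e1D a b c p q : e1 a b c (p + q) = e1 a b c p + e1 a b c q. Proof. exact: rmorphD. Qed.
Lemma e1B a b c p q : e1 a b c (p - q) = e1 a b c p - e1 a b c q. Proof. exact: rmorphB. Qed.
Lemma e1M a b c p q : e1 a b c (p * q) = e1 a b c p * e1 a b c q. Proof. exact: rmorphM. Qed.
Lemma e1cst a b c x : e1 a b c (cst x) = iota x.
Proof. by rewrite /cst e1C e2C e3C. Qed.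
Lemma e1x1 a b c : e1 a b c (x1 k) = a. Proof. exact: e1X. Qed.
Lemma e1x2 a b c : e1 a b c (x2 k) = b. Proof. by rewrite /x2 e1C e2X. Qed.
Lemma e1x3 a b c : e1 a b c (x3 k) = c. Proof. by rewrite /x3 e1C e2C e3X. Qed.

Lemma uniq_poly (T : nzRingType) (f1 f2 : {rmorphism {poly T} -> S}) :
  (forall a, f1 a%:P = f2 a%:P) -> f1 'X = f2 'X -> f1 =1 f2.
Proof.
move=> HC HX; apply: poly_ind => [|p a IHp]; first by rewrite !rmorph0.
by rewrite !rmorphD !rmorphM /= IHp HX HC.
Qed.

Lemma uniq3 (f1 f2 : {rmorphism P3 k -> S}) :
  (forall a, f1 (cst a) = f2 (cst a)) ->
  f1 (x1 k) = f2 (x1 k) -> f1 (x2 k) = f2 (x2 k) -> f1 (x3 k) = f2 (x3 k) ->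
  f1 =1 f2.
Proof.
move=> HC H1 H2 H3.
apply: uniq_poly => // q.
have := @uniq_poly _ (f1 \o polyC) (f2 \o polyC). apply => // r.
have := @uniq_poly _ ((f1 \o polyC) \o polyC) ((f2 \o polyC) \o polyC). apply => //.
Qed.

End Ev.

End M1.
Import M1.

Module M2.
Set Implicit Arguments. Unset Strict Implicit. Unset Printing Implicit Defensive.
Local Open Scope ring_scope.

Section S.
Variable k : fieldType.
Definition cstm : {rmorphism k -> P3 k} := ((@polyC _) \o (@polyC _)) \o (@polyC _).
Lemma cstmE c : cstm c = cst c. Proof. by []. Qed.

Lemma size_mapP (aR rR : nzSemiRingType) (f : aR -> rR) p : (size (map_poly f p) <= size p)%N.
Proof. exact: size_poly. Qed.

Definition ev (F : map3 k) := e1 cstm (c1 F) (c2 F) (c3 F).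

Lemma sub3E p F : sub3 p F = ev F p.
Proof.
rewrite /sub3 /ev e1E (horner_coef_wide _ (size_mapP _ _)).
apply: eq_bigr => i _; rewrite coef_map; congr (_ * _).
transitivity ((map_poly (e3 cstm (c3 F)) p`_i).[c2 F]); last by [].
rewrite (horner_coef_wide _ (size_mapP _ _)).
apply: eq_bigr => j _; rewrite coef_map; congr (_ * _).
transitivity ((map_poly cstm p`_i`_j).[c3 F]); last by [].
rewrite (horner_coef_wide _ (size_mapP _ _)).
by apply: eq_bigr => l _; rewrite coef_map.
Qed.
End S.

Section S2.
Variable k : fieldType.
Implicit Types F G H : map3 k.

Lemma evC F c : ev F (cst c) = cst c.
Proof. by rewrite /ev /cst e1C e2C e3C. Qed.
Lemma ev1 F : ev F (x1 k) = c1 F.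
Proof. by rewrite /ev /x1 e1X. Qed.
Lemma ev2 F : ev F (x2 k) = c2 F.
Proof. by rewrite /ev /x2 e1C e2X. Qed.
Lemma ev3 F : ev F (x3 k) = c3 F.
Proof. by rewrite /ev /x3 e1C e2C e3X. Qed.

Lemma evD F p q : ev F (p + q) = ev F p + ev F q. Proof. exact: rmorphD. Qed.
Lemma evB F p q : ev F (p - q) = ev F p - ev F q. Proof. exact: rmorphB. Qed.
Lemma evN F p : ev F (- p) = - ev F p. Proof. exact: rmorphN. Qed.
Lemma evM F p q : ev F (p * q) = ev F p * ev F q. Proof. exact: rmorphM. Qed.
Lemma ev_sum F m (u : 'I_m -> P3 k) : ev F (\sum_(i < m) u i) = \sum_(i < m) ev F (u i).
Proof. exact: rmorph_sum. Qed.

Lemma sub3_id p : sub3 p (id3 k) = p.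
Proof.
rewrite sub3E; apply: (@uniq3 k _ (ev (id3 k)) idfun) => //.
- by move=> a; exact: evC.
- exact: ev1.
- exact: ev2.
- exact: ev3.
Qed.

Lemma sub3_comp p G H : sub3 (sub3 p G) H = sub3 p (comp3 G H).
Proof.
rewrite !sub3E; apply: (@uniq3 k _ (ev H \o ev G) (ev (comp3 G H))).
- move=> a; change (ev H (ev G (cst a)) = ev (comp3 G H) (cst a)).
  by rewrite !evC.
- change (ev H (ev G (x1 k)) = ev (comp3 G H) (x1 k)).
  by rewrite !ev1 /comp3 /c1 /= sub3E.
- change (ev H (ev G (x2 k)) = ev (comp3 G H) (x2 k)).
  by rewrite !ev2 /comp3 /c2 /= sub3E.
- change (ev H (ev G (x3 k)) = ev (comp3 G H) (x3 k)).
  by rewrite !ev3 /comp3 /c3 /= sub3E.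
Qed.

Lemma sub3_x1 F : sub3 (x1 k) F = c1 F. Proof. by rewrite sub3E ev1. Qed.
Lemma sub3_x2 F : sub3 (x2 k) F = c2 F. Proof. by rewrite sub3E ev2. Qed.
Lemma sub3_x3 F : sub3 (x3 k) F = c3 F. Proof. by rewrite sub3E ev3. Qed.

Lemma map3_eq F G : c1 F = c1 G -> c2 F = c2 G -> c3 F = c3 G -> F = G.
Proof. by case: F => [[a b] c]; case: G => [[a0 b0] c0]; rewrite /c1 /c2 /c3 /= => -> -> ->. Qed.

Lemma comp3A F G H : comp3 (comp3 F G) H = comp3 F (comp3 G H).
Proof. by apply: map3_eq; rewrite /comp3 /mk3 /c1 /c2 /c3 /= sub3_comp. Qed.
Lemma comp3_id F : comp3 F (id3 k) = F.
Proof. by apply: map3_eq; rewrite /comp3 /mk3 /c1 /c2 /c3 /= sub3_id. Qed.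
Lemma comp_id3 F : comp3 (id3 k) F = F.
Proof. by apply: map3_eq; rewrite /comp3 /mk3 /= ?sub3_x1 ?sub3_x2 ?sub3_x3. Qed.
End S2.

End M2.
Import M2.

Module M3.
Set Implicit Arguments. Unset Strict Implicit. Unset Printing Implicit Defensive.
Local Open Scope ring_scope.
Local Open Scope Z_scope.

Section Grp.
Variable k : fieldType.
Implicit Types F G H : map3 k.
Definition pw F m := iter m (comp3 F) (id3 k).

Lemma pwS F m : pw F m.+1 = comp3 F (pw F m). Proof. by []. Qed.
Lemma pwSr F m : pw F m.+1 = comp3 (pw F m) F.
Proof.
elim: m => [|m IH]; first by rewrite /pw /= comp3_id comp_id3.
by rewrite [LHS]pwS [in LHS]IH -comp3A -pwS.
Qed.

Lemma pw_inv F G : comp3 F G = id3 k -> forall m, comp3 (pw F m) (pw G m) = id3 k.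
Proof.
move=> FG; elim=> [|m IH]; first by rewrite /pw /= comp_id3.
by rewrite pwS pwSr comp3A -(comp3A (pw F m)) IH comp_id3 FG.
Qed.

Variables (n : nat) (g h : map3 k).
Hypotheses (hg1 : comp3 g (ginv k) = id3 k) (hg2 : comp3 (ginv k) g = id3 k)
  (hh1 : comp3 h (hinv k) = id3 k) (hh2 : comp3 (hinv k) h = id3 k).

Lemma fmap_finv : comp3 (fmap n g h) (finv k n) = id3 k.
Proof.
rewrite /fmap /finv comp3A -(comp3A h) hh1 comp_id3.
exact: (pw_inv hg1).
Qed.
Lemma finv_fmap : comp3 (finv k n) (fmap n g h) = id3 k.
Proof.
rewrite /fmap /finv comp3A -(comp3A (iter n (comp3 (ginv k)) (id3 k))).
by rewrite (pw_inv hg2) comp_id3 hh2.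
Qed.

Local Notation P := (fpowZ n g h).
Local Notation Fm := (fmap n g h).
Local Notation Gm := (finv k n).

Lemma P0 : P 0 = id3 k. Proof. by []. Qed.

Lemma Ppos z : (0 <= z) -> P (z + 1) = comp3 Fm (P z).
Proof.
move=> hz; rewrite /fpowZ.
have -> : Z.leb 0 (z + 1) = true by apply/Z.leb_le; lia.
have -> : Z.leb 0 z = true by apply/Z.leb_le; lia.
by rewrite Z2Nat.inj_add //= Nat.add_1_r.
Qed.

Lemma Pneg z : (z < 0) -> P z = comp3 Gm (P (z + 1)).
Proof.
move=> hz; rewrite /fpowZ.
have -> : Z.leb 0 z = false by apply/Z.leb_gt; lia.
case: (Z.leb_spec 0 (z + 1)) => hz1.
  have -> : z = (-1) by lia.
  by [].
have -> : Z.to_nat (- z) = S (Z.to_nat (- (z + 1))) by lia.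
by [].
Qed.

Lemma PS z : P (z + 1) = comp3 Fm (P z).
Proof.
case: (Z.leb_spec 0 z) => hz; first exact: Ppos.
by rewrite (Pneg hz) -comp3A fmap_finv comp_id3.
Qed.

Lemma PP' w : P w = comp3 Gm (P (w + 1)).
Proof.
case: (Z.leb_spec 0 w) => hw; last exact: Pneg.
by rewrite (Ppos hw) -comp3A finv_fmap comp_id3.
Qed.

Lemma PP z : P (z - 1) = comp3 Gm (P z).
Proof. by rewrite PP' Z.sub_add. Qed.

Lemma PD a b : comp3 (P a) (P b) = P (a + b).
Proof.
elim/Z.peano_ind: a => [|a IH|a IH].
- by rewrite P0 comp_id3.
- rewrite -!Z.add_1_r PS comp3A IH.
  have -> : (a + 1 + b) = (a + b + 1) by lia.
  by rewrite PS.
- rewrite -!Z.sub_1_r PP comp3A IH.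
  have -> : (a - 1 + b) = (a + b - 1) by lia.
  by rewrite PP.
Qed.

End Grp.

End M3.
Import M3.

Module M4.
Set Implicit Arguments. Unset Strict Implicit. Unset Printing Implicit Defensive.
Local Open Scope ring_scope.

Section Expl.
Variable k : fieldType.
Implicit Types F G H : map3 k.
Definition g0 : map3 k := mk3 (x2 k - x1 k * x3 k) (x1 k) (x3 k).
Definition h0 : map3 k := mk3 (x2 k) (x3 k) (x1 k).

Lemma ginv_g0 : comp3 (ginv k) g0 = id3 k.
Proof.
apply: map3_eq; rewrite /comp3 /ginv /mk3 /c1 /c2 /c3 /= !sub3E.
- exact: ev2.
- rewrite evD evM.
  rewrite (ev1 g0) (ev2 g0) (ev3 g0) /g0 /mk3 /c1 /c2 /c3 /=.
  by rewrite subrK.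
- exact: ev3.
Qed.

Lemma hinv_h0 : comp3 (hinv k) h0 = id3 k.
Proof.
apply: map3_eq; rewrite /comp3 /hinv /mk3 /c1 /c2 /c3 /= !sub3E.
- exact: ev3.
- exact: ev1.
- exact: ev2.
Qed.

Lemma left_inv_uniq F Fi G0 : comp3 F Fi = id3 k -> comp3 Fi G0 = id3 k -> F = G0.
Proof. by move=> h1 h2; rewrite -(comp3_id F) -h2 -comp3A h1 comp_id3. Qed.
End Expl.

End M4.
Import M4.

Module M5.
Set Implicit Arguments. Unset Strict Implicit. Unset Printing Implicit Defensive.
Local Open Scope ring_scope.

Section Phi.
Variable k : fieldType.
Implicit Types F G H : map3 k.
Definition Tr := ({poly k} * {poly k} * {poly k})%type.
Definition pC : {rmorphism k -> {poly k}} := @polyC k.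
Definition EV (V : Tr) := e1 pC V.1.1 V.1.2 V.2.
Definition Phi := EV ('X, 'X, 'X).
Definition TT G : Tr := (Phi (c1 G), Phi (c2 G), Phi (c3 G)).

Lemma Phi_sub p G : Phi (sub3 p G) = EV (TT G) p.
Proof.
rewrite sub3E.
apply: (@uniq3 k _ (Phi \o ev G) (EV (TT G))).
- move=> a; change (Phi (ev G (cst a)) = EV (TT G) (cst a)).
  by rewrite evC /Phi /EV !e1cst.
- change (Phi (ev G (x1 k)) = EV (TT G) (x1 k)).
  by rewrite ev1 /EV e1x1.
- change (Phi (ev G (x2 k)) = EV (TT G) (x2 k)).
  by rewrite ev2 /EV e1x2.
- change (Phi (ev G (x3 k)) = EV (TT G) (x3 k)).
  by rewrite ev3 /EV e1x3.
Qed.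

Lemma TT_comp F G : TT (comp3 F G) = (EV (TT G) (c1 F), EV (TT G) (c2 F), EV (TT G) (c3 F)).
Proof. by rewrite /TT /comp3 /mk3 /c1 /c2 /c3 /= !Phi_sub. Qed.

Definition gst (V : Tr) : Tr := (V.1.2 - V.1.1 * V.2, V.1.1, V.2).
Definition hst (V : Tr) : Tr := (V.1.2, V.2, V.1.1).
Definition gist (V : Tr) : Tr := (V.1.2, V.1.1 + V.1.2 * V.2, V.2).
Definition hist (V : Tr) : Tr := (V.2, V.1.1, V.1.2).

Lemma TT_g0 G : TT (comp3 (g0 k) G) = gst (TT G).
Proof.
rewrite TT_comp /g0 /mk3 /c1 /c2 /c3 /= /EV.
by rewrite e1B e1M !e1x1 !e1x2 !e1x3.
Qed.
Lemma TT_h0 G : TT (comp3 (h0 k) G) = hst (TT G).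
Proof. by rewrite TT_comp /h0 /mk3 /c1 /c2 /c3 /= /EV e1x2 e1x3 e1x1. Qed.
Lemma TT_ginv G : TT (comp3 (ginv k) G) = gist (TT G).
Proof.
rewrite TT_comp /ginv /mk3 /c1 /c2 /c3 /= /EV.
by rewrite e1D e1M !e1x1 !e1x2 !e1x3.
Qed.
Lemma TT_hinv G : TT (comp3 (hinv k) G) = hist (TT G).
Proof. by rewrite TT_comp /hinv /mk3 /c1 /c2 /c3 /= /EV e1x3 e1x1 e1x2. Qed.
Lemma TT_id : TT (id3 k) = ('X, 'X, 'X).
Proof. by rewrite /TT /id3 /mk3 /c1 /c2 /c3 /= /Phi /EV e1x1 e1x2 e1x3. Qed.

Lemma TT_pw F (st : Tr -> Tr) : (forall G, TT (comp3 F G) = st (TT G)) ->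
  forall m G, TT (comp3 (pw F m) G) = iter m st (TT G).
Proof.
move=> hF; elim=> [|m IH] G; first by rewrite /pw /= comp_id3.
by rewrite pwS comp3A hF IH.
Qed.
End Phi.

End M5.
Import M5.

Module M6.
Set Implicit Arguments. Unset Strict Implicit. Unset Printing Implicit Defensive.
Local Open Scope ring_scope.

Section Deg.
Variable k : fieldType.
Definition sz3 (V : Tr k) a b c :=
  size V.1.1 = a.+1 /\ size V.1.2 = b.+1 /\ size V.2 = c.+1.

Lemma nz_of_size (p : {poly k}) a : size p = a.+1 -> p != 0.
Proof. by move=> h; rewrite -size_poly_eq0 h. Qed.

Lemma size_mulS (p q : {poly k}) a c : size p = a.+1 -> size q = c.+1 ->
  size (p * q) = (a + c).+1.
Proof.
move=> hp hq; rewrite size_mul ?(nz_of_size hp) ?(nz_of_size hq) //.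
by rewrite hp hq addSn addnS.
Qed.

Lemma gst_sz V a b c : sz3 V a b c -> (b < a + c)%N -> sz3 (gst V) (a + c) a c.
Proof.
case=> [h1 [h2 h3]] hb; rewrite /sz3 /gst /=; split; last by [].
have hm := size_mulS h1 h3.
rewrite addrC size_polyDl size_polyN hm //.
by rewrite h2 ltnS.
Qed.

Lemma gist_sz V a b c : sz3 V a b c -> (a < b + c)%N -> sz3 (gist V) b (b + c) c.
Proof.
case=> [h1 [h2 h3]] hb; rewrite /sz3 /gist /=; split; first by [].
have hm := size_mulS h2 h3.
rewrite addrC size_polyDl hm //.
by rewrite h1 ltnS.
Qed.

Lemma hst_sz V a b c : sz3 V a b c -> sz3 (hst V) b c a.
Proof. by case=> [h1 [h2 h3]]. Qed.
Lemma hist_sz V a b c : sz3 V a b c -> sz3 (hist V) c a b.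
Proof. by case=> [h1 [h2 h3]]. Qed.

Lemma gIter m V a b c : sz3 V a b c -> (b < a + c)%N -> (0 < c)%N ->
  exists a' b', [/\ sz3 (iter m (@gst k) V) a' b' c, (b' < a' + c)%N & (a + m * c <= a')%N].
Proof.
move=> hV hb hc; elim: m => [|m [a' [b' [h1 h2 h3]]]].
  by exists a, b; split => //; rewrite mul0n addn0.
exists (a' + c)%N, a'; split.
- exact: gst_sz h1 h2.
- lia.
- rewrite mulSn; lia.
Qed.

Lemma giIter m V a b c : sz3 V a b c -> (a < b + c)%N -> (0 < c)%N ->
  exists a' b', [/\ sz3 (iter m (@gist k) V) a' b' c, (a' < b' + c)%N & (b + m * c <= b')%N].
Proof.
move=> hV hb hc; elim: m => [|m [a' [b' [h1 h2 h3]]]].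
  by exists a, b; split => //; rewrite mul0n addn0.
exists b', (b' + c)%N; split.
- exact: gist_sz h1 h2.
- lia.
- rewrite mulSn; lia.
Qed.

Variable n : nat.
Hypothesis hn : (2 <= n)%N.

Definition fstp (V : Tr k) := iter n (@gst k) (hst V).
Definition fistp (V : Tr k) := hist (iter n (@gist k) V).

Lemma fStep V a b c : sz3 V a b c -> (0 < a)%N -> (c < a + b)%N ->
  exists a' b' c', [/\ sz3 (fstp V) a' b' c', (0 < a')%N, (c' < a' + b')%N & (2 <= a')%N].
Proof.
move=> hV ha hc.
have [a'' [b'' [h1 h2 h3]]] := gIter n (hst_sz hV) (ltac:(lia)) ha.
exists a'', b'', a; split => //; try nia.
Qed.

Lemma fiStep V a b c : sz3 V a b c -> (a < b + c)%N -> (0 < c)%N ->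
  exists a' b', [/\ sz3 (fistp V) c a' b', (c < a' + b')%N, (0 < b')%N & (2 <= b')%N].
Proof.
move=> hV ha hc.
have [a'' [b'' [h1 h2 h3]]] := giIter n hV ha hc.
exists a'', b''; split => //; try nia.
exact: hist_sz.
Qed.
End Deg.

End M6.
Import M6.

Module M7.
Set Implicit Arguments. Unset Strict Implicit. Unset Printing Implicit Defensive.
Local Open Scope ring_scope.

Section Key.
Variable k : fieldType.
Variables (n : nat) (g h : map3 k).
Hypothesis hn : (3 <= n)%N.
Hypotheses (hg1 : comp3 g (ginv k) = id3 k) (hg2 : comp3 (ginv k) g = id3 k)
  (hh1 : comp3 h (hinv k) = id3 k) (hh2 : comp3 (hinv k) h = id3 k).

Local Notation Fm := (fmap n g h).
Local Notation Gm := (finv k n).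

Lemma g_eq : g = g0 k. Proof. exact: left_inv_uniq hg1 (ginv_g0 k). Qed.
Lemma h_eq : h = h0 k. Proof. exact: left_inv_uniq hh1 (hinv_h0 k). Qed.

Lemma TT_Fm Q : TT (comp3 Fm Q) = fstp n (TT Q).
Proof.
rewrite /fmap g_eq h_eq comp3A.
rewrite (@TT_pw k (g0 k) (@gst k) (@TT_g0 k) n (comp3 (h0 k) Q)).
by rewrite TT_h0.
Qed.

Lemma TT_Gm Q : TT (comp3 Gm Q) = fistp n (TT Q).
Proof.
rewrite /finv comp3A TT_hinv.
by rewrite (@TT_pw k (ginv k) (@gist k) (@TT_ginv k) n Q).
Qed.

Lemma posInv j : exists a b c, [/\ sz3 (TT (pw Fm j)) a b c, (0 < a)%N,
  (c < a + b)%N & (0 < j -> 2 <= a)%N].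
Proof.
elim: j => [|j [a [b [c [h1 h2 h3 h4]]]]].
  exists 1%N, 1%N, 1%N; split => //.
  by rewrite /pw /= TT_id /sz3 /= size_polyX.
have hn2 : (2 <= n)%N by lia.
have [a' [b' [c' [h1' h2' h3' h4']]]] := fStep hn2 h1 h2 h3.
exists a', b', c'; split; first by rewrite pwS TT_Fm.
all: done.
Qed.

Lemma negInv j : exists a b c, [/\ sz3 (TT (pw Gm j)) a b c, (a < b + c)%N, (0 < c)%N,
  (0 < j -> 2 <= c)%N & (1 < j -> 2 <= a)%N].
Proof.
elim: j => [|j [a [b [c [h1 h2 h3 h4 h5]]]]].
  exists 1%N, 1%N, 1%N; split => //.
  by rewrite /pw /= TT_id /sz3 /= size_polyX.
have hn2 : (2 <= n)%N by lia.
have [a' [b' [h1' h2' h3' h4']]] := fiStep hn2 h1 h2 h3.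
exists c, a', b'; split; first by rewrite pwS TT_Gm.
all: try done.
Qed.

Lemma c3_pw_ginv m : c3 (pw (ginv k) m) = x3 k.
Proof.
elim: m => [|m IH]; first by [].
by rewrite pwS /comp3 /ginv /mk3 /c3 /= sub3_x3.
Qed.

Lemma c1_Gm : c1 (pw Gm 1) = x3 k.
Proof.
rewrite /pw /= comp3_id /finv /comp3 /hinv /mk3 /c1 /= sub3_x3.
exact: c3_pw_ginv.
Qed.
End Key.

Section Key2.
Variable k : fieldType.
Variables (n : nat) (g h : map3 k).
Hypothesis hn : (3 <= n)%N.
Hypotheses (hg1 : comp3 g (ginv k) = id3 k) (hg2 : comp3 (ginv k) g = id3 k)
  (hh1 : comp3 h (hinv k) = id3 k) (hh2 : comp3 (hinv k) h = id3 k).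
Local Notation Fm := (fmap n g h).
Local Notation Gm := (finv k n).
Local Notation P := (fpowZ n g h).

Lemma P_cases z : z <> Z0 ->
  (exists j, (0 < j)%N /\ P z = pw Fm j) \/ (exists j, (0 < j)%N /\ P z = pw Gm j).
Proof.
move=> hz; rewrite /fpowZ; case: (Z.leb_spec 0 z) => hz0.
  by left; exists (Z.to_nat z); split => //; lia.
by right; exists (Z.to_nat (- z)); split => //; lia.
Qed.

Lemma phi_span a b c : (size (Phi (cst a * x1 k + cst b * x3 k + cst c)) <= 2)%N.
Proof.
rewrite /Phi /EV !e1D !e1M !e1cst e1x1 e1x3 /= -mulrDl size_MXaddC.
case: ifP => // _; rewrite ltnS.
apply: leq_trans (size_polyD _ _) _.
by rewrite geq_max !size_polyC_leq1.
Qed.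

Lemma cst0 : cst 0 = 0 :> P3 k.
Proof. by rewrite /cst !polyC0. Qed.

Lemma big_P3 (Q : map3 k) (a : nat) :
  (2 <= a)%N -> size (Phi (c1 Q)) = a.+1 ->
  forall al be ga, c1 Q = cst al * x1 k + cst be * x3 k + cst ga -> False.
Proof.
move=> ha hs al be ga E.
have := phi_span al be ga; rewrite -E hs; lia.
Qed.

Lemma key_even z al be : z <> Z0 -> c1 (P z) = cst al * x1 k + cst be -> False.
Proof.
move=> hz E.
have E' : c1 (P z) = cst al * x1 k + cst 0 * x3 k + cst be by rewrite cst0 mul0r addr0.
case: (P_cases hz) => [[j [hj hP]]|[j [hj hP]]]; rewrite hP in E E'.
- have [a [b [c [[s1 [_ _]] _ _ h4]]]] := posInv hn hg1 hh1 j.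
  exact: (big_P3 (h4 hj) s1 E').
- have [a [b [c [[s1 [_ _]] _ _ _ h5]]]] := negInv k hn j.
  case: (ltnP 1 j) => hj1.
    exact: (big_P3 (h5 hj1) s1 E').
  have ej : j = 1%N by lia.
  move: E; rewrite ej c1_Gm => E.
  have := congr1 (EV ((0 : {poly k}), (0 : {poly k}), 'X)) E.
  rewrite /EV e1D e1M !e1cst e1x1 e1x3 /= mulr0 add0r => E2.
  have := size_polyX k; rewrite E2 /pC /= => h2.
  have := size_polyC_leq1 be; rewrite h2; lia.
Qed.

Lemma key_odd z al be ga de ep ze : z <> Z0 ->
  c1 (P z) = cst al * x1 k + cst be * x3 k + cst ga ->
  c3 (P z) = cst de * x1 k + cst ep * x3 k + cst ze -> False.
Proof.
move=> hz E1 E3.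
case: (P_cases hz) => [[j [hj hP]]|[j [hj hP]]]; rewrite hP in E1 E3.
- have [a [b [c [[s1 [_ _]] _ _ h4]]]] := posInv hn hg1 hh1 j.
  exact: (big_P3 (h4 hj) s1 E1).
- have [a [b [c [[_ [_ s3]] _ _ h4 _]]]] := negInv k hn j.
  have := phi_span de ep ze; rewrite -E3.
  move: s3; rewrite /TT /= => ->; have := h4 hj; lia.
Qed.
End Key2.

End M7.
Import M7.

Module M8.
Set Implicit Arguments. Unset Strict Implicit. Unset Printing Implicit Defensive.
Local Open Scope ring_scope.

Section VI.
Variable k : fieldType.
Variables (n : nat) (g h : map3 k).
Hypothesis hn : (3 <= n)%N.
Hypotheses (hg1 : comp3 g (ginv k) = id3 k) (hg2 : comp3 (ginv k) g = id3 k)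
  (hh1 : comp3 h (hinv k) = id3 k) (hh2 : comp3 (hinv k) h = id3 k).
Local Notation P := (fpowZ n g h).

Lemma c1_sub (F G : map3 k) : sub3 (c1 F) G = c1 (comp3 F G). Proof. by []. Qed.
Lemma c3_sub (F G : map3 k) : sub3 (c3 F) G = c3 (comp3 F G). Proof. by []. Qed.

Lemma c1_back u : sub3 (c1 (P u)) (P (- u)) = x1 k.
Proof. by rewrite c1_sub (PD n hg1 hg2 hh1 hh2) Z.add_opp_diag_r. Qed.
Lemma c3_back u : sub3 (c3 (P u)) (P (- u)) = x3 k.
Proof. by rewrite c3_sub (PD n hg1 hg2 hh1 hh2) Z.add_opp_diag_r. Qed.

Lemma vi_even u v al be : c1 (P v) = cst al * c1 (P u) + cst be -> u = v.
Proof.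
move=> E.
have E2 := congr1 (fun p => sub3 p (P (- u))) E; move: E2 => /=.
rewrite c1_sub (PD n hg1 hg2 hh1 hh2) [in RHS]sub3E evD evM !evC -sub3E c1_back => E2.
case: (Z.eq_dec (v + - u) 0) => hz; first lia.
by case: (key_even hn hg1 hh1 hz E2).
Qed.

Lemma vi_odd u v al be ga de ep ze :
  c1 (P v) = cst al * c1 (P u) + cst be * c3 (P u) + cst ga ->
  c3 (P v) = cst de * c1 (P u) + cst ep * c3 (P u) + cst ze -> u = v.
Proof.
move=> E1 E3.
have F1 := congr1 (fun p => sub3 p (P (- u))) E1; move: F1 => /=.
rewrite c1_sub (PD n hg1 hg2 hh1 hh2) [in RHS]sub3E !evD !evM !evC -!sub3E c1_back c3_back => F1.
have F3 := congr1 (fun p => sub3 p (P (- u))) E3; move: F3 => /=.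
rewrite c3_sub (PD n hg1 hg2 hh1 hh2) [in RHS]sub3E !evD !evM !evC -!sub3E c1_back c3_back => F3.
case: (Z.eq_dec (v + - u) 0) => hz; first lia.
by case: (key_odd hn hg1 hh1 hz F1 F3).
Qed.
End VI.

End M8.
Import M8.

Module M9.
Set Implicit Arguments. Unset Strict Implicit. Unset Printing Implicit Defensive.
Local Open Scope ring_scope.

Section Fin.
Variable k : fieldType.
Variables (n : nat) (g h : map3 k).
Hypothesis hn : (3 <= n)%N.
Hypotheses (hg1 : comp3 g (ginv k) = id3 k) (hg2 : comp3 (ginv k) g = id3 k)
  (hh1 : comp3 h (hinv k) = id3 k) (hh2 : comp3 (hinv k) h = id3 k).

Lemma gvert_inj m m' : vert_eq (gvert n g h m) (gvert n g h m') -> m = m'.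
Proof.
rewrite /gvert /act.
case E: (Z.even m); case E': (Z.even m') => /=; rewrite ?sub3_x1 ?sub3_x3.
- case=> _ [A [b [_ H]]].
  have := H ord0; rewrite big_ord1 /= => H0.
  have hq := vi_even hn hg1 hg2 hh1 hh2 H0.
  have := Zmod_even m; have := Zmod_even m'; rewrite E E' /=.
  have := Z.div_mod m 2 ltac:(lia); have := Z.div_mod m' 2 ltac:(lia); lia.
- by case.
- by case.
- case=> _ [A [b [_ H]]].
  have := H ord0; rewrite big_ord_recl big_ord1 /= => H0.
  have := H (lift ord0 ord0); rewrite big_ord_recl big_ord1 /= => H1.
  have hq := vi_odd hn hg1 hg2 hh1 hh2 H0 H1.
  have := Zmod_even m; have := Zmod_even m'; rewrite E E' /=.
  have := Z.div_mod m 2 ltac:(lia); have := Z.div_mod m' 2 ltac:(lia); lia.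
Qed.

Lemma gamma_inj : forall s s' : R, point_eq (gamma n g h s) (gamma n g h s') -> s = s'.
Proof.
move=> s s'; rewrite /gamma.
case: (Req_EM_T (s - IZR (Int_part s)) 0) => hs;
case: (Req_EM_T (s' - IZR (Int_part s')) 0) => hs' //=.
- move/gvert_inj => hm; rewrite hm in hs; lra.
- case=> [[V1 [_ ht]]|[V1 [V2 _]]].
    move/gvert_inj: V1 => hm; rewrite hm in ht; lra.
  move/gvert_inj: V1 => hm1; move/gvert_inj: V2 => hm2; lia.
Qed.
End Fin.

End M9.
Import M9.

Unset Implicit Arguments. Set Strict Implicit. Set Printing Implicit Defensive.

Theorem corollary7p5 (k : fieldType) (char0 : [pchar k] =i pred0)
  (n : nat) (hn : (3 <= n)%N)
  (g h : map3 k)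
  (hg1 : comp3 g (ginv k) = id3 k) (hg2 : comp3 (ginv k) g = id3 k)
  (hh1 : comp3 h (hinv k) = id3 k) (hh2 : comp3 (hinv k) h = id3 k) :
  forall s s' : R, point_eq (gamma n g h s) (gamma n g h s') -> s = s'.
Proof.
exact: (gamma_inj hn hg1 hg2 hh1 hh2).
Qed.
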